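(* For every positive integer $n$, $\mathrm{Sort}_n(\mathrm{SC}_{3\underline{21}})=\mathrm{Av}_n(123,132)$, the set of permutations in $\mathfrak S_n$ avoiding both classical patterns $123$ and $132$.
   Context: $\mathfrak S_n$ is the set of permutations of $\{1,\dots,n\}$. A vincular pattern is a permutation with some entries underlined; a sequence contains it if it has a subsequence with the same relative order in which entries corresponding to adjacent underlined entries occupy consecutive positions. An occurrence of $3\underline{21}$ is $a_i a_j a_{j+1}$ with $i<j$ and $a_{j+1}<a_j<a_i$. Classical patterns have no underlining. For a pattern $\sigma$, the map $\mathrm{SC}_\sigma$ acts on $\tau$: read entries left to right; when the next entry $x$ is read, if pushing $x$ yields a stack whose entries read top to bottom (stack adjacency = consecutive positions) avoid $\sigma$, push $x$; otherwise pop the top stack entry to the output and repeat. At the end pop all remaining entries; the output is $\mathrm{SC}_\sigma(\tau)$. West's stack-sorting map is $s=\mathrm{SC}_{21}$. $\mathrm{Sort}_n(\mathrm{SC}_\sigma)=\{\tau\in\mathfrak S_n : s(\mathrm{SC}_\sigma(\tau))=12\cdots n\}$. *)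

(* Defs.v *)
(* Permutations of {1..n} are represented as sequences of
   naturals that are permutations (perm_eq) of [:: 1; ...; n]. *)
From mathcomp Require Import all_boot.
Set Implicit Arguments. Unset Strict Implicit. Unset Printing Implicit Defensive.

(* A vincular pattern: a permutation [p] (as a seq) together with a list [adj]
   of positions k (0-indexed) such that entries k and k+1 of [p] are
   underlined-adjacent, i.e. must occupy consecutive positions. *)

Definition vocc (p adj s idx : seq nat) : bool :=
  [&& size idx == size p,
      all (fun i => i < size s) idx,
      sorted ltn idx,
      all (fun k => nth 0 idx k.+1 == (nth 0 idx k).+1) adj &
      all (fun i => all (fun j =>
          (nth 0 s (nth 0 idx i) < nth 0 s (nth 0 idx j)) ==
          (nth 0 p i < nth 0 p j)) (iota 0 (size p))) (iota 0 (size p))].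

Fixpoint subsq (k : nat) (l : seq nat) : seq (seq nat) :=
  match l with
  | [::] => if k is 0 then [:: [::]] else [::]
  | x :: l' => if k is k'.+1 then map (cons x) (subsq k' l') ++ subsq k l'
               else [:: [::]]
  end.

Definition vcontains (p adj s : seq nat) : bool :=
  has (vocc p adj s) (subsq (size p) (iota 0 (size s))).

Definition contains (p s : seq nat) : bool := vcontains p [::] s.
Definition avoids (p s : seq nat) : bool := ~~ contains p s.

(* The pattern-avoiding stack machine SC_sigma, with sigma = (p, adj).
   Stacks are stored as sequences read from top to bottom. *)
Fixpoint push_loop (p adj : seq nat) (x : nat) (st out : seq nat)
  : seq nat * seq nat :=
  if ~~ vcontains p adj (x :: st) then (x :: st, out) else
  match st with
  | [::] => ([:: x], out)
  | y :: st' => push_loop p adj x st' (rcons out y)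
  end.

Fixpoint SC_aux (p adj : seq nat) (t st out : seq nat) : seq nat :=
  match t with
  | [::] => out ++ st
  | x :: t' => let: (st', out') := push_loop p adj x st out in
               SC_aux p adj t' st' out'
  end.

Definition SC (p adj : seq nat) (t : seq nat) : seq nat := SC_aux p adj t [::] [::].

Definition west_s (t : seq nat) : seq nat := SC [:: 2; 1] [::] t.

Definition SC_3_21 (t : seq nat) : seq nat := SC [:: 3; 2; 1] [:: 1] t.

Definition in_Sort_n (n : nat) (t : seq nat) : bool :=
  perm_eq t (iota 1 n) && (west_s (SC_3_21 t) == iota 1 n).

Definition in_Av_n_123_132 (n : nat) (t : seq nat) : bool :=
  [&& perm_eq t (iota 1 n), avoids [:: 1; 2; 3] t & avoids [:: 1; 3; 2] t].

(* Main.v *)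
Require Import Defs.
From mathcomp Require Import all_boot zify.
Set Implicit Arguments. Unset Strict Implicit.


Lemma subsq_all n m idx : sorted ltn idx -> all (fun i => m <= i < m + n) idx ->
  idx \in subsq (size idx) (iota m n).
Proof.
elim: n m idx => [|n IH] m idx.
  case: idx => [|i idx] //= _; rewrite addn0; case/andP=> /andP[h1 h2]; lia.
case: idx => [|i idx] //= Hs /andP[Hi Ha].
rewrite mem_cat; apply/orP.
have Hall : all (ltn i) idx := order_path_min (@ltn_trans) Hs.
case: (ltnP m i) => Hmi.
  right. have -> : (size idx).+1 = size (i :: idx) by [].
  apply: IH => //=; apply/andP; split; first lia.
  apply/allP => y Hy; move/allP: Ha => /(_ y Hy); move/allP: Hall => /(_ y Hy) H1 H2; have : i < y := H1; lia.
left. have -> : i = m by lia.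
apply: map_f; apply: IH; first exact: path_sorted Hs.
apply/allP => y Hy; move/allP: Ha => /(_ y Hy); move/allP: Hall => /(_ y Hy) H1 H2; have : i < y := H1; lia.
Qed.

Lemma vcontainsP p adj s : reflect (exists idx, vocc p adj s idx) (vcontains p adj s).
Proof.
apply: (iffP hasP) => [[idx _ H]|[idx H]]; first by exists idx.
exists idx => //.
move: (H) => /and5P[/eqP <- H2 H3 _ _].
apply: subsq_all => //; apply/allP => y Hy; move/allP: H2 => /(_ y Hy) /=; lia.
Qed.

Definition bad3 (s : seq nat) := exists i j, i < j /\ j.+1 < size s /\
  nth 0 s j < nth 0 s i /\ nth 0 s j.+1 < nth 0 s j.

Lemma vc321 s : vcontains [:: 3; 2; 1] [:: 1] s <-> bad3 s.
Proof.
split.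
  move/vcontainsP=> [[|i [|j [|k [|l idx]]]]] //; rewrite /vocc /=;
   try by rewrite !andbF.
 rewrite !andbT => H; have /eqP Hk : k == j.+1 by move/and5P: H => [_ _ ->].
  subst k; exists i, j; lia.
rewrite /bad3 => -[i [j [H1 [H2 [H3 H4]]]]]; apply/vcontainsP; exists [:: i; j; j.+1].
rewrite /vocc /= !andbT; lia.
Qed.


Lemma vc21 s : vcontains [:: 2; 1] [::] s <->
  exists i j, i < j /\ j < size s /\ nth 0 s j < nth 0 s i.
Proof.
split.
  move/vcontainsP=> [[|i [|j [|k idx]]]] //; rewrite /vocc /=;
   try by rewrite !andbF.
  rewrite !andbT => H; exists i, j; lia.
move=> [i [j [H1 [H2 H3]]]]; apply/vcontainsP; exists [:: i; j].
rewrite /vocc /= !andbT; lia.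
Qed.

Definition occ3 (s : seq nat) (P : nat -> nat -> nat -> bool) :=
  exists i j k, [/\ i < j, j < k, k < size s & P (nth 0 s i) (nth 0 s j) (nth 0 s k)].

Lemma vc123 s : contains [:: 1; 2; 3] s <-> occ3 s (fun a b c => (a < b) && (b < c)).
Proof.
split.
  move/vcontainsP=> [[|i [|j [|k [|l idx]]]]] //; rewrite /vocc /=;
   try by rewrite !andbF.
  rewrite !andbT => H; exists i, j, k; split; lia.
move=> [i [j [k [H1 H2 H3 H4]]]]; apply/vcontainsP; exists [:: i; j; k].
rewrite /vocc /= !andbT; lia.
Qed.

Lemma vc132 s : contains [:: 1; 3; 2] s <-> occ3 s (fun a b c => (a < c) && (c < b)).
Proof.
split.
  move/vcontainsP=> [[|i [|j [|k [|l idx]]]]] //; rewrite /vocc /=;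
   try by rewrite !andbF.
  rewrite !andbT => H; exists i, j, k; split; lia.
move=> [i [j [k [H1 H2 H3 H4]]]]; apply/vcontainsP; exists [:: i; j; k].
rewrite /vocc /= !andbT; lia.
Qed.

Lemma not_sorted_desc (r : seq nat) : ~~ sorted leq r ->
  exists j, j.+1 < size r /\ nth 0 r j.+1 < nth 0 r j.
Proof.
elim: r => [|x r IH] //=; case: r IH => [|y r] IH //=.
case: (leqP x y) => Hxy /=.
  move=> /IH [j [H1 H2]]; exists j.+1; split => //.
by move=> _; exists 0.
Qed.

Lemma c21_sorted s : vcontains [:: 2; 1] [::] s = ~~ sorted leq s.
Proof.
apply/idP/idP.
  move/vc21=> [i [j [H1 [H2 H3]]]]; apply/negP => Hs.
  have := @sorted_leq_nth _ _ leq_trans leqnn 0 s Hs i j.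
  rewrite !inE; move=> /(_ ltac:(lia) ltac:(lia) ltac:(lia)); lia.
move/not_sorted_desc=> [j [H1 H2]]; apply/vc21; exists j, j.+1; lia.
Qed.


Fixpoint Qb (s : seq nat) : bool :=
  if s is x :: s' then Qb s' || (1 < count (fun y => x < y) s') else false.

Lemma count2 (P : pred nat) s j k : j < k -> k < size s ->
  P (nth 0 s j) -> P (nth 0 s k) -> 1 < count P s.
Proof.
move=> Hjk Hk Pj Pk.
rewrite -(cat_take_drop k s) count_cat (drop_nth 0 Hk) /= Pk.
have : has P (take k s).
  apply/hasP; exists (nth 0 s j) => //.
  rewrite -(nth_take 0 Hjk); apply: mem_nth; rewrite size_takel //; exact: ltnW.
rewrite has_count /= => ?; lia.
Qed.

Lemma count2_inv (P : pred nat) s : 1 < count P s ->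
  exists j k, [/\ j < k, k < size s, P (nth 0 s j) & P (nth 0 s k)].
Proof.
elim: s => [|x s IH] //=.
case Px: (P x) => /=.
  rewrite add1n ltnS -has_count => /hasP [y Hy Py].
  exists 0, (index y s).+1; split => //=; first by rewrite ltnS index_mem.
  by rewrite nth_index.
rewrite add0n => /IH [j [k [H1 H2 H3 H4]]]; exists j.+1, k.+1; split => //.
Qed.

Definition Q3 s := occ3 s (fun a b c => (a < b) && (a < c)).

Lemma Q3_Qb s : Q3 s <-> Qb s.
Proof.
elim: s => [|x s IH] /=.
  split => // -[i [j [k [H1 H2 H3 _]]]] //.
split.
  move=> [[|i] [[|j] [[|k] [H1 H2 H3 H4]]]] //=; move: H3 H4 => /= H3 /andP[H4 H5].
    apply/orP; right; apply: (count2 (j := j) (k := k)) => //=; lia.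
  apply/orP; left; apply/IH; exists i, j, k; split => //; try lia; by rewrite H4 H5.
case/orP.
  move/IH=> [i [j [k [H1 H2 H3 H4]]]]; exists i.+1, j.+1, k.+1; split => //=.
move/count2_inv=> [j [k [H1 H2 H3 H4]]]; exists 0, j.+1, k.+1; split => //=.
by rewrite H3 H4.
Qed.

Lemma Av_Qb s : uniq s ->
  (contains [:: 1; 2; 3] s || contains [:: 1; 3; 2] s) = Qb s.
Proof.
move=> Hu; apply/idP/idP.
  case/orP => [/vc123|/vc132] [i [j [k [H1 H2 H3 H4]]]]; apply/Q3_Qb;
    exists i, j, k; split => //; lia.
move/Q3_Qb=> [i [j [k [H1 H2 H3 H4]]]].
have Hne : nth 0 s j != nth 0 s k by rewrite nth_uniq //; [rewrite neq_ltn H2 | exact: ltn_trans H2 H3].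
case: (ltngtP (nth 0 s j) (nth 0 s k)) => Hc.
- apply/orP; left; apply/vc123; exists i, j, k; split => //; lia.
- apply/orP; right; apply/vc132; exists i, j, k; split => //; lia.
- by rewrite Hc eqxx in Hne.
Qed.


Definition run p adj (t st out : seq nat) : seq nat * seq nat :=
  foldl (fun so x => push_loop p adj x so.1 so.2) (st, out) t.

Lemma SC_aux_run p adj t st out :
  SC_aux p adj t st out = (run p adj t st out).2 ++ (run p adj t st out).1.
Proof.
elim: t st out => [|x t IH] st out //=.
rewrite /run /=; case: push_loop => st' out'; exact: IH.
Qed.

Lemma run_cons p adj x t st out st' out' :
  push_loop p adj x st out = (st', out') ->
  run p adj (x :: t) st out = run p adj t st' out'.
Proof. by move=> E; rewrite /run /= E. Qed.

Lemma run_cat p adj t1 t2 st out :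
  run p adj (t1 ++ t2) st out =
  run p adj t2 (run p adj t1 st out).1 (run p adj t1 st out).2.
Proof. by rewrite /run foldl_cat; case: (foldl _ _ t1). Qed.

Lemma PL p adj x st out : exists k, [/\ k <= size st,
  push_loop p adj x st out = (x :: drop k st, out ++ take k st),
  (k < size st -> ~~ vcontains p adj (x :: drop k st)) &
  forall k', k' < k -> vcontains p adj (x :: drop k' st)].
Proof.
elim: st out => [|y st IH] out /=.
  by exists 0; rewrite cats0; case: ifP.
case: ifP => H.
  by exists 0; split => //; rewrite ?cats0 ?drop0.
have [k [H1 H2 H3 H4]] := IH (rcons out y).
exists k.+1; split => //.
- by rewrite H2 cat_rcons.
- case=> [|k'] Hk' /=; first exact: (negbFE H).
  exact: H4.
Qed.

Lemma run_perm p adj t st out :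
  perm_eq ((run p adj t st out).2 ++ (run p adj t st out).1) (out ++ st ++ t).
Proof.
elim: t st out => [|x t IH] st out; first by rewrite /run /= cats0.
have [k [_ E _ _]] := PL p adj x st out; rewrite (run_cons _ E).
apply: perm_trans (IH _ _) _ => /=.
rewrite -catA perm_cat2l -{3}(cat_take_drop k st) -catA perm_cat2l.
by rewrite -cat1s -[x :: _]cat1s perm_catCA.
Qed.

Lemma SC_perm p adj t : perm_eq (SC p adj t) t.
Proof. by rewrite /SC SC_aux_run; apply: perm_trans (run_perm _ _ _ _ _) _. Qed.


Lemma sorted_ins (X Y : seq nat) a : all (fun u => u < a) X -> all (fun v => a <= v) Y ->
  sorted leq (X ++ a :: Y) = sorted leq (X ++ Y).
Proof.
move=> HX HY.
rewrite !(sorted_pairwise leq_trans) !pairwise_cat pairwise_cons allrel_consr.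
have -> : allrel leq X Y.
  apply/allrelP => u v Hu Hv; move/allP: HX => /(_ u Hu); move/allP: HY => /(_ v Hv); lia.
have -> : all (leq^~ a) X by apply/allP => u Hu; move/allP: HX => /(_ u Hu); lia.
by rewrite HY.
Qed.

Lemma sorted_le_mid (X Y : seq nat) a z : sorted leq (X ++ a :: Y) -> z \in X -> z <= a.
Proof.
rewrite (sorted_pairwise leq_trans) pairwise_cat allrel_consr => /and3P[/andP[H _] _ _] Hz.
by move/allP: H => /(_ z Hz).
Qed.

Lemma push21 x st out : sorted leq st -> exists k, [/\
  push_loop [:: 2; 1] [::] x st out = (x :: drop k st, out ++ take k st),
  all (fun y => y < x) (take k st), all (fun y => x <= y) (drop k st) &
  sorted leq (x :: drop k st)].
Proof.
move=> Hs; have [k [H1 H2 H3 H4]] := PL [:: 2; 1] [::] x st out.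
have Hsd : sorted leq (x :: drop k st).
  case: (ltnP k (size st)) => Hk; first by move: (H3 Hk); rewrite c21_sorted negbK.
  by rewrite drop_oversize.
exists k; split => //.
- apply/(all_nthP 0) => i; rewrite size_takel // => Hi.
  rewrite nth_take //.
  move: (H4 i Hi); rewrite c21_sorted (drop_nth 0 (leq_trans Hi H1)) /=.
  have := drop_sorted i Hs; rewrite (drop_nth 0 (leq_trans Hi H1)) /= => ->.
  by rewrite andbT; case: leqP.
- by move: Hsd => /= /(order_path_min leq_trans).
Qed.

Definition Inv21 (st out : seq nat) :=
  sorted leq st /\ forall z, z \in out -> has (fun w => z < w) st.

Lemma run21_inv t st out : Inv21 st out ->
  Inv21 (run [:: 2; 1] [::] t st out).1 (run [:: 2; 1] [::] t st out).2.
Proof.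
elim: t st out => [|x t IH] st out //.
move=> [Hs Ho]; have [k [E Ht Hd Hsd]] := push21 x out Hs.
rewrite (run_cons _ E); apply: IH; split => // z.
rewrite mem_cat => /orP[/Ho /hasP [w Hw Hzw]|Hz].
  rewrite -(cat_take_drop k st) mem_cat in Hw; case/orP: Hw => Hw.
    apply/hasP; exists x; first exact: mem_head.
    move/allP: Ht => /(_ w Hw); lia.
  by apply/hasP; exists w => //; rewrite inE Hw orbT.
apply/hasP; exists x; first exact: mem_head.
by move/allP: Ht => /(_ z Hz).
Qed.

Lemma west_run W : west_s W = (run [:: 2; 1] [::] W [::] [::]).2 ++ (run [:: 2; 1] [::] W [::] [::]).1.
Proof. by rewrite /west_s /SC SC_aux_run. Qed.

Lemma westD W a : a \notin W ->
  (forall y z, y \in W -> z \in W -> a < y -> a < z -> y = z) ->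
  sorted leq (west_s (W ++ [:: a])) = sorted leq (west_s W).
Proof.
move=> Ha Hu; rewrite !west_run run_cat.
have := run21_inv W (st := [::]) (out := [::]) (conj (erefl _) (fun z (H : z \in [::]) => H)).
have := run_perm [:: 2; 1] [::] W [::] [::].
case: (run _ _ W _ _) => st out /= Hp [Hs Ho].
have [k [E Ht Hd Hsd]] := push21 a out Hs.
rewrite (run_cons _ E) /run /= sorted_ins.
- by rewrite -catA cat_take_drop.
- rewrite all_cat Ht andbT; apply/allP => z Hz.
  have [w Hw Hzw] := hasP (Ho z Hz).
  have HzW : z \in W by rewrite -(perm_mem Hp) mem_cat Hz.
  have HwW : w \in W by rewrite -(perm_mem Hp) mem_cat Hw orbT.
  have Hza : z != a by apply: contraNneq Ha => <-.
  case: (ltngtP z a) Hza => // Hza _.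
  have := Hu z w HzW HwW Hza (ltn_trans Hza Hzw); lia.
- exact: Hd.
Qed.

Lemma run_out_prefix p adj t st out : exists u, (run p adj t st out).2 = out ++ u.
Proof.
elim: t st out => [|x t IH] st out; first by exists [::]; rewrite /run /= cats0.
have [k [_ E _ _]] := PL p adj x st out; rewrite (run_cons _ E).
have [u ->] := IH (x :: drop k st) (out ++ take k st).
by exists (take k st ++ u); rewrite catA.
Qed.

Lemma westE2 W2 st out M' M : M' \in out ++ st -> M \in W2 -> M' < M ->
  M' \in (run [:: 2; 1] [::] W2 st out).2.
Proof.
elim: W2 st out => [|x W2 IH] st out //= H1 H2 H3.
have [k [_ E H5 _]] := PL [:: 2; 1] [::] x st out; rewrite (run_cons _ E).
case: (x =P M) => [Hx|Hx].
  subst x.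
  have Hin : M' \in out ++ take k st.
    move: H1; rewrite !mem_cat -{1}(cat_take_drop k st) mem_cat orbA.
    case/orP => // Hd; exfalso.
    have Hk : k < size st.
      rewrite ltnNge; apply/negP => Hk; by rewrite drop_oversize in Hd.
    move: (H5 Hk); rewrite c21_sorted negbK /= => /(order_path_min leq_trans) /allP /(_ M' Hd).
    lia.
  have [u ->] := run_out_prefix [:: 2; 1] [::] W2 (M :: drop k st) (out ++ take k st).
  by rewrite mem_cat Hin.
apply: IH => //.
  move: H1; rewrite !mem_cat -{1}(cat_take_drop k st) mem_cat orbA inE => /orP[->|->] //.
  by rewrite !orbT.
by move: H2; rewrite inE => /orP[/eqP Hm|//]; subst x.
Qed.

Lemma westE W1 W2 a M' M : M' \in W1 -> M \in W2 -> a < M' -> M' < M ->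
  ~~ sorted leq (west_s (W1 ++ W2 ++ [:: a])).
Proof.
move=> H1 H2 H3 H4; rewrite west_run catA run_cat run_cat.
have := run_perm [:: 2; 1] [::] W1 [::] [::].
case: (run _ _ W1 _ _) => st1 out1 /= Hp1.
have Hin1 : M' \in out1 ++ st1 by rewrite (perm_mem Hp1).
have := westE2 Hin1 H2 H4.
case: (run _ _ W2 _ _) => st out /= Hout.
have [k [_ E _ _]] := PL [:: 2; 1] [::] a st out.
rewrite (run_cons _ E) /run /=; apply/negP => Hs.
have := sorted_le_mid Hs (z := M'); rewrite mem_cat Hout => /(_ isT); lia.
Qed.


Definition one_above a (s : seq nat) :=
  forall y z, y \in s -> z \in s -> a < y -> a < z -> y = z.

Lemma one_above_sub a (s1 s2 : seq nat) : {subset s1 <= s2} -> one_above a s2 -> one_above a s1.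
Proof. by move=> Hs H y z Hy Hz; apply: H; apply: Hs. Qed.

Lemma bad3_app s a : one_above a s -> bad3 (s ++ [:: a]) -> bad3 s.
Proof.
move=> Hu [i [j [H1 [H2 [H3 H4]]]]].
rewrite size_cat /= in H2.
have e : forall n, n < size s -> nth 0 (s ++ [:: a]) n = nth 0 s n.
  by move=> n h; rewrite nth_cat h.
case: (ltnP j.+1 (size s)) => Hj.
  exists i, j; rewrite -!e //; try lia.
have Hj' : j.+1 = size s by lia.
have Ea : nth 0 (s ++ [:: a]) j.+1 = a by rewrite nth_cat Hj' ltnn subnn.
rewrite Ea e in H4; last lia.
rewrite !e in H3; try lia.
have Hi : i < size s by lia. have Hjs : j < size s by lia.
have := Hu _ _ (mem_nth 0 Hi) (mem_nth 0 Hjs).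
have h1 : a < nth 0 s i by lia.
move=> /(_ h1 H4) Heq; by rewrite Heq ltnn in H3.
Qed.

Lemma bad3_app_r s a : bad3 s -> bad3 (s ++ [:: a]).
Proof.
move=> [i [j [H1 [H2 [H3 H4]]]]]; exists i, j.
rewrite size_cat !nth_cat; rewrite ifT; last lia.
rewrite ifT; last lia. rewrite ifT; last lia. lia.
Qed.

Lemma bad3_A x y r : x < y -> bad3 [:: x, y & r] -> bad3 (y :: r).
Proof.
move=> Hxy [[|i] [[|[|j]] [H1 [H2 [H3 H4]]]]] //; move: H2 H3 H4 => /= H2 H3 H4;
  first [ exfalso; lia | exists 0, j.+1; simpl; lia | exists i, 0; simpl; lia
        | exists i, j.+1; simpl; lia ].
Qed.

Lemma bad3_B (M : nat) (r : seq nat) : (forall z, z \in r -> z < M) -> ~~ sorted leq r -> bad3 (M :: r).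
Proof.
move=> HM /not_sorted_desc [j [H1 H2]].
have Hj : j < size r by lia.
have HjM : nth 0 r j < M := HM _ (mem_nth 0 Hj).
exists 0, j.+1; rewrite /=; lia.
Qed.

Lemma bad3_drop k s : bad3 (drop k s) -> bad3 s.
Proof.
move=> [i [j [H1 [H2 [H3 H4]]]]]; exists (k + i), (k + j).
rewrite size_drop in H2; rewrite !nth_drop in H3 H4 *; rewrite addnS in H4; split; [lia|split; [lia|split; [lia|exact: H4]]].
Qed.

Lemma bad3_small s : size s <= 2 -> ~ bad3 s.
Proof. move=> Hs [i [j [H1 [H2 _]]]]; lia. Qed.

Lemma push321_bot x st a out : one_above a (x :: st) ->
  push_loop [:: 3; 2; 1] [:: 1] x (st ++ [:: a]) out =
  ((push_loop [:: 3; 2; 1] [:: 1] x st out).1 ++ [:: a],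
   (push_loop [:: 3; 2; 1] [:: 1] x st out).2).
Proof.
elim: st out => [|y st IH] out Hu.
  by rewrite /=.
rewrite /=.
have -> : vcontains [:: 3; 2; 1] [:: 1] [:: x, y & st ++ [:: a]] =
          vcontains [:: 3; 2; 1] [:: 1] [:: x, y & st].
  apply/idP/idP => /vc321 H; apply/vc321.
    exact: (@bad3_app (x :: y :: st) a Hu H).
  exact: (@bad3_app_r (x :: y :: st) a H).
case: ifP => // _; apply: IH.
apply: one_above_sub Hu => z; rewrite !inE => /orP[->|->] //; by rewrite !orbT.
Qed.

Lemma SC_bot t st out a : one_above a (t ++ st) ->
  SC_aux [:: 3; 2; 1] [:: 1] t (st ++ [:: a]) out =
  SC_aux [:: 3; 2; 1] [:: 1] t st out ++ [:: a].
Proof.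
elim: t st out => [|x t IH] st out Hu; first by rewrite /= catA.
have Hu1 : one_above a (x :: st).
  apply: one_above_sub Hu => z; rewrite !inE mem_cat => /orP[->|->] //; by rewrite !orbT.
rewrite /= push321_bot //.
have [k [_ E _ _]] := PL [:: 3; 2; 1] [:: 1] x st out; rewrite E /=.
apply: (IH (x :: drop k st)); apply: one_above_sub Hu => z.
rewrite !mem_cat !inE => /orP[->|/orP[->|Hz]]; rewrite ?orbT //.
by rewrite (mem_drop Hz) !orbT.
Qed.

Lemma SC_cons_bot a t : one_above a t -> SC_3_21 (a :: t) = SC_3_21 t ++ [:: a].
Proof.
move=> Hu; rewrite /SC_3_21 /SC /=.
have -> : SC_aux [:: 3; 2; 1] [:: 1] t [:: a] [::] =
          SC_aux [:: 3; 2; 1] [:: 1] t ([::] ++ [:: a]) [::] by [].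
by rewrite SC_bot // cats0.
Qed.


Lemma IT (s : seq nat) k y : k <= size s -> (y \in take k s) = (index y s < k).
Proof.
move=> Hk; rewrite -{2}(cat_take_drop k s) index_cat size_takel //.
case: ifP => H.
  by move: H; rewrite -index_mem size_takel // => ->.
by apply/esym/negbTE; rewrite -leqNgt leq_addr.
Qed.

Lemma ID (s : seq nat) k y : k <= size s -> y \notin take k s ->
  index y s = k + index y (drop k s).
Proof.
move=> Hk Hy; rewrite -{1}(cat_take_drop k s) index_cat size_takel //.
by rewrite (negbTE Hy).
Qed.

Lemma drop_cat_le (s1 s2 : seq nat) k : k <= size s1 -> drop k (s1 ++ s2) = drop k s1 ++ s2.
Proof.
move=> Hk; rewrite drop_cat; case: ltnP => H //.
have -> : k = size s1 by lia.
by rewrite subnn drop0 drop_size.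
Qed.

Lemma take_cat_le (s1 s2 : seq nat) k : k <= size s1 -> take k (s1 ++ s2) = take k s1.
Proof.
move=> Hk; rewrite take_cat; case: ltnP => H //.
have -> : k = size s1 by lia.
by rewrite subnn take0 cats0 take_size.
Qed.

Section F.
Variables (a M' M : nat).
Hypothesis aM' : a < M'.
Hypothesis M'M : M' < M.

Definition J (st out : seq nat) :=
  M \in out ++ st -> M \in st /\
    (M' \in out ++ st -> M' \in out \/ (M' \in st /\ index M' st < index M st)).

Lemma J_step x st0 out k :
  let st := st0 ++ [:: a] in
  uniq (out ++ st ++ [:: x]) ->
  (forall y, y \in out ++ st ++ [:: x] -> y <= M) ->
  ~ bad3 st ->
  (forall k', k' < k -> bad3 (x :: drop k' st)) ->
  ~ bad3 (x :: drop k st) ->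
  k <= size st0 ->
  J st out -> J (x :: drop k st) (out ++ take k st).
Proof.
move=> st Hu Hb Hnb Hmin Hnb' Hk HJ HM.
have Hks : k <= size st by rewrite /st size_cat; lia.
have Hxn : x \notin out ++ st.
  by move: Hu; rewrite catA cat_uniq => /and3P[_ /norP[/negP H _] _]; apply/negP.
have Hmem : forall y, y \in (out ++ take k st) ++ x :: drop k st ->
            y = x \/ y \in out ++ st.
  move=> y.
  have Hp : perm_eq ((out ++ take k st) ++ x :: drop k st) (x :: (out ++ st)).
    rewrite -[x :: drop k st]/([:: x] ++ drop k st) perm_catCA /= -catA cat_take_drop.
    exact: perm_refl.
  by rewrite (perm_mem Hp) inE => /orP[/eqP|]; [left|right].
case HMo: (M \in out ++ st).
  have [HMs HJ'] := HJ HMo.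
  have HxM : x != M by apply: contraNneq Hxn => ->.
  have Hxin : x \in out ++ st ++ [:: x] by rewrite !mem_cat mem_head !orbT.
  have HxM' : x < M by have := Hb x Hxin; move: HxM; rewrite neq_ltn; lia.
  have HkM : k <= index M st.
    rewrite leqNgt; apply/negP => Hlt.
    have := Hmin _ Hlt; rewrite (drop_nth 0 (leq_trans Hlt Hks)) nth_index // => Hbad.
    apply: Hnb; apply: (@bad3_drop (index M st)).
    rewrite (drop_nth 0 (leq_trans Hlt Hks)) nth_index //.
    exact: bad3_A HxM' Hbad.
  have HMt : M \notin take k st by rewrite IT // -leqNgt.
  have HMd : M \in drop k st.
    by move: HMs; rewrite -{1}(cat_take_drop k st) mem_cat (negbTE HMt).
  have EM : index M (x :: drop k st) = (index M (drop k st)).+1.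
    by rewrite /= (negbTE HxM).
  split; first by rewrite inE HMd orbT.
  move=> HM'.
  case: (Hmem _ HM') => [Ex|HM'o].
    right; subst x; rewrite EM /= eqxx; split => //; exact: mem_head.
  have HxM'' : x != M' by apply: contraNneq Hxn => ->.
  case: (HJ' HM'o) => [Ho|[Hs Hi]]; first by left; rewrite mem_cat Ho.
  case HM't: (M' \in take k st); first by left; rewrite mem_cat HM't orbT.
  right.
  have HM'd : M' \in drop k st.
    by move: Hs; rewrite -{1}(cat_take_drop k st) mem_cat HM't.
  split; first by rewrite inE HM'd orbT.
  have EM' : index M' (x :: drop k st) = (index M' (drop k st)).+1.
    by rewrite /= (negbTE HxM'').
  rewrite EM EM'.
  rewrite (ID Hks (negbT HM't)) (ID Hks HMt) in Hi.
  by rewrite ltnS -(ltn_add2l k).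
have HxM : x = M.
  by case: (Hmem _ HM) => // H; rewrite H in HMo.
subst x.
split; first exact: mem_head.
move=> HM'.
have HM'M : M' != M by rewrite neq_ltn M'M.
left.
move: HM'; rewrite mem_cat inE (negbTE HM'M) /= => /orP[//|Hd].
exfalso; apply: Hnb'.
have Hd' : drop k st = drop k st0 ++ [:: a] by rewrite /st drop_cat_le.
apply: bad3_B.
  move=> z Hz.
  have Hzs : z \in st by apply: mem_drop Hz.
  have Hzin : z \in out ++ st ++ [:: M].
    by rewrite mem_cat; apply/orP; right; rewrite mem_cat Hzs.
  have Hle := Hb z Hzin.
  have Hzn : z != M by apply: contraNneq (negbT HMo) => <-; rewrite mem_cat Hzs orbT.
  by move: Hzn; rewrite neq_ltn => /orP[//|H]; exfalso; lia.
rewrite Hd'; apply/negP => Hs.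
have HM'a : M' \in drop k st0.
  by move: Hd; rewrite Hd' mem_cat mem_seq1 => /orP[//|/eqP E]; exfalso; move: aM'; rewrite E ltnn.
have := sorted_le_mid (Y := [::]) Hs HM'a; lia.
Qed.


Lemma F_run (T : seq nat) t st0 out :
  uniq T -> (forall y, y \in T -> y <= M) ->
  perm_eq (out ++ (st0 ++ [:: a]) ++ t) T ->
  ~ bad3 (st0 ++ [:: a]) -> J (st0 ++ [:: a]) out ->
  exists st0', (run [:: 3; 2; 1] [:: 1] t (st0 ++ [:: a]) out).1 = st0' ++ [:: a] /\
     J (run [:: 3; 2; 1] [:: 1] t (st0 ++ [:: a]) out).1
       (run [:: 3; 2; 1] [:: 1] t (st0 ++ [:: a]) out).2.
Proof.
move=> HuT HbT.
elim: t st0 out => [|x t IH] st0 out Hp Hnb HJ.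
  by exists st0; rewrite /run /=.
have [k [Hk E H3 H4]] := PL [:: 3; 2; 1] [:: 1] x (st0 ++ [:: a]) out.
have Hk0 : k <= size st0.
  rewrite leqNgt; apply/negP => Hlt.
  have := H4 _ Hlt; rewrite drop_size_cat // => /vc321; apply: bad3_small => //.
have Hlt : k < size (st0 ++ [:: a]) by rewrite size_cat /=; lia.
have Hnb' : ~ bad3 (x :: drop k (st0 ++ [:: a])).
  by move=> h; move: (H3 Hlt) => /negP; apply; apply/vc321.
have Hmin : forall k', k' < k -> bad3 (x :: drop k' (st0 ++ [:: a])).
  by move=> k' h; apply/vc321; apply: H4.
have Hs := run_perm [:: 3; 2; 1] [:: 1] [:: x] (st0 ++ [:: a]) out.
rewrite (run_cons _ E) /run /= in Hs.
have Hp1 : perm_eq ((out ++ (st0 ++ [:: a]) ++ [:: x]) ++ t) T.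
  by move: Hp; rewrite -!catA.
have Hu1 : uniq (out ++ (st0 ++ [:: a]) ++ [:: x]).
  by move: (perm_uniq Hp1); rewrite HuT cat_uniq => /and3P[].
have Hb1 : forall y, y \in out ++ (st0 ++ [:: a]) ++ [:: x] -> y <= M.
  by move=> y Hy; apply: HbT; rewrite -(perm_mem Hp1) mem_cat Hy.
have HJ1 := J_step Hu1 Hb1 Hnb Hmin Hnb' Hk0 HJ.
rewrite (run_cons _ E).
move: Hs HJ1 Hnb'; rewrite (take_cat_le _ Hk0) (drop_cat_le _ Hk0) => Hs HJ1 Hnb'.
apply: (IH (x :: drop k st0)) => //.
apply: perm_trans Hp1; rewrite catA; apply: perm_trans (_ : perm_eq _ ((out ++ (st0 ++ [:: a]) ++ [:: x]) ++ t)) _.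
  by rewrite perm_cat2r.
exact: perm_refl.
Qed.

End F.


Lemma F_final a M' M (t : seq nat) : a < M' -> M' < M -> uniq (a :: t) ->
  M \in t -> M' \in t -> (forall y, y \in t -> y <= M) ->
  exists W1 W2, [/\ SC_3_21 (a :: t) = W1 ++ W2 ++ [:: a], M' \in W1 & M \in W2].
Proof.
move=> H1 H2 Hu HM HM' Hb.
have Ea : SC_3_21 (a :: t) = SC_aux [:: 3; 2; 1] [:: 1] t ([::] ++ [:: a]) [::] by [].
rewrite Ea SC_aux_run.
have HbT : forall y, y \in a :: t -> y <= M.
  by move=> y; rewrite inE => /orP[/eqP->|/Hb//]; lia.
have HJ0 : J M' M ([::] ++ [:: a]) [::].
  move=> /=; rewrite inE => /eqP E; exfalso; lia.
have Hnb0 : ~ bad3 ([::] ++ [:: a]) by apply: bad3_small.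
have [st0' [E1 HJ]] := @F_run a M' M H1 H2 (a :: t) t [::] [::] Hu HbT (perm_refl (a :: t)) Hnb0 HJ0.
have Hp := run_perm [:: 3; 2; 1] [:: 1] t ([::] ++ [:: a]) [::].
move: HJ Hp E1.
case: (run [:: 3; 2; 1] [:: 1] t ([::] ++ [:: a]) [::]) => st out /= HJ Hp E1.
subst st.
have HMin : M \in out ++ st0' ++ [:: a] by rewrite (perm_mem Hp) inE HM orbT.
have HM'in : M' \in out ++ st0' ++ [:: a] by rewrite (perm_mem Hp) inE HM' orbT.
have [HMs HJ'] := HJ HMin.
have HMa : M != a by rewrite neq_ltn; apply/orP; right; lia.
have HM'a : M' != a by rewrite neq_ltn; apply/orP; right; lia.
have HMs0 : M \in st0' by move: HMs; rewrite mem_cat mem_seq1 (negbTE HMa) orbF.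
case: (HJ' HM'in) => [Ho|[Hs Hi]].
  by exists out, st0'.
have HM's0 : M' \in st0' by move: Hs; rewrite mem_cat mem_seq1 (negbTE HM'a) orbF.
rewrite !index_cat HMs0 HM's0 in Hi.
set n := index M st0'.
have Hn : n <= size st0' by apply: index_size.
exists (out ++ take n st0'), (drop n st0'); split.
- by rewrite -[in LHS](cat_take_drop n st0') -!catA.
- by rewrite mem_cat IT // Hi orbT.
- have HMt : M \notin take n st0' by rewrite IT // ltnn.
  by move: HMs0; rewrite -{1}(cat_take_drop n st0') mem_cat (negbTE HMt).
Qed.

Lemma count_one_above a (t : seq nat) : count (fun y => a < y) t <= 1 -> one_above a t.
Proof.
move=> Hc y z Hy Hz Hay Haz; apply/eqP; apply: contraLR Hc => Hyz.
rewrite -ltnNge -size_filter.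
have : uniq [:: y; z] by rewrite /= inE Hyz.
move/uniq_leq_size => /(_ (filter (fun y => a < y) t)).
apply => u; rewrite !inE mem_filter => /orP[/eqP->|/eqP->]; by apply/andP.
Qed.

Fixpoint maxs (s : seq nat) := if s is x :: s' then maxn x (maxs s') else 0.

Lemma maxs_ge (s : seq nat) y : y \in s -> y <= maxs s.
Proof.
elim: s => [|x s IH] //=; rewrite inE => /orP[/eqP->|/IH H]; lia.
Qed.

Lemma maxs_in (s : seq nat) : s != [::] -> maxs s \in s.
Proof.
elim: s => [|x s IH] // _; rewrite /=.
case: (eqVneq s [::]) => [->|Hs]; first by rewrite /= maxn0 inE.
rewrite inE; case: (leqP x (maxs s)) => H.
  by rewrite IH // orbT.
by rewrite eqxx.
Qed.

Lemma main_lemma (t : seq nat) : uniq t ->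
  sorted leq (west_s (SC_3_21 t)) = ~~ Qb t.
Proof.
elim: t => [|a t IH] //= /andP[Hat Hu].
case: (ltnP 1 (count (fun y => a < y) t)) => Hc.
  rewrite orbT /=; apply/negbTE.
  have [j [k [H1 H2 H3 H4]]] := count2_inv Hc.
  have Hjt : j < size t by lia.
  have Hne : nth 0 t j != nth 0 t k by rewrite nth_uniq // neq_ltn H1.
  have Htn : t != [::] by case: (t) H2.
  set M := maxs t.
  set M' := if nth 0 t j == M then nth 0 t k else nth 0 t j.
  have HM'in : M' \in t by rewrite /M'; case: ifP => _; apply: mem_nth.
  have HaM' : a < M' by rewrite /M'; case: ifP.
  have HM'ne : M' != M.
    rewrite /M'; case: ifP => [/eqP E|/negbT //]; by rewrite -E eq_sym.
  have HM'M : M' < M by have := maxs_ge HM'in; move: HM'ne; rewrite neq_ltn; lia.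
  have [W1 [W2 [E HW1 HW2]]] := F_final HaM' HM'M (t := t) (a := a)
    ltac:(by rewrite /= Hat Hu) (maxs_in Htn) HM'in (fun y => @maxs_ge t y).
  by rewrite E; apply: westE HW1 HW2 HaM' HM'M.
rewrite orbF.
have Hoa := count_one_above Hc.
rewrite SC_cons_bot // westD ?IH //.
  by rewrite (perm_mem (SC_perm _ _ _)).
by move=> y z; rewrite !(perm_mem (SC_perm _ _ _)); apply: Hoa.
Qed.

Unset Implicit Arguments.
Theorem mainTheorem7 (n : nat) : 0 < n ->
  forall t : seq nat, in_Sort_n n t = in_Av_n_123_132 n t.
Proof.
move=> _ t; rewrite /in_Sort_n /in_Av_n_123_132.
case Hp: (perm_eq t (iota 1 n)) => //=.
have Hu : uniq t by rewrite (perm_uniq Hp) iota_uniq.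
rewrite /avoids -negb_or Av_Qb // -main_lemma //.
have HpV : perm_eq (west_s (SC_3_21 t)) (iota 1 n).
  apply: perm_trans (SC_perm _ _ _) _; apply: perm_trans (SC_perm _ _ _) Hp.
apply/eqP/idP => [->|Hs]; first exact: iota_sorted.
by apply: (sorted_eq leq_trans anti_leq) => //; exact: iota_sorted.
Qed.
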